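(* Let $G$ be a bipartite graph with bipartition $\{X,Y\}$, and let $(S,T)$ be a minimum barrier of $G$. Then: (i) $T\subseteq X$; (ii) for each component $C$ of $G-(S\cup T)$ that is not $T$-odd, $\varepsilon_G(T,C)=0$; (iii) for each $T$-odd component $C$ of $G-(S\cup T)$ and each $u\in T$, $\varepsilon_G(u,C)\le 1$; (iv) if $O_1,\dots,O_q$ are the $T$-odd components of $G-(S\cup T)$, where $q=q(S,T)$, then $|T|-|S|>\frac12\sum_{i=1}^{q}\big(\varepsilon_G(T,O_i)-1\big)$.
   Context: For disjoint $A,B\subseteq V(G)$, $\varepsilon_G(A,B)$ is the number of edges with one endpoint in $A$ and the other in $B$; for a subgraph $C$, $\varepsilon_G(A,C)=\varepsilon_G(A,V(C))$, and $\varepsilon_G(u,C)=\varepsilon_G(\{u\},C)$. For $S\subseteq X$ and $T\subseteq X\cup Y$ with $S\cap T=\varnothing$: a component $C$ of $G-(S\cup T)$ is $T$-odd if $\varepsilon_G(T,C)$ is odd; $q(S,T)$ is the number of $T$-odd components; $\delta(S,T)=2|S|+\sum_{v\in T}\deg_{G-S}(v)-2|T\cap X|-q(S,T)$. Such a pair $(S,T)$ is a barrier if $\delta(S,T)<0$; its size is $|S\cup T|$; a minimum barrier is a barrier of smallest possible size. *)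

(* Defs.v *)
From mathcomp Require Import all_boot all_order all_algebra.
Set Implicit Arguments. Unset Strict Implicit. Unset Printing Implicit Defensive.
Import GRing.Theory Num.Theory.

Section Barrier.
Variable V : finType.
Variable e : rel V.

Definition simple_graph := symmetric e /\ irreflexive e.

Definition bipartition (X Y : {set V}) :=
  [/\ X :&: Y = set0, X :|: Y = [set: V] &
      forall x y, e x y -> (x \in X /\ y \in Y) \/ (x \in Y /\ y \in X)].

(* eps(A,B) : number of edges with one end in A and the other in B
   (for disjoint A, B: ordered pairs (a,b), a in A, b in B, adjacent). *)
Definition eps (A B : {set V}) : nat :=
  #|[set p : V * V | [&& p.1 \in A, p.2 \in B & e p.1 p.2]]|.

Definition del_rel (W : {set V}) : rel V :=
  [rel x y | [&& e x y, x \notin W & y \notin W]].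

Definition component (W C : {set V}) : bool :=
  [exists x, (x \notin W) && (C == [set y | connect (del_rel W) x y])].

Definition deg_del (S : {set V}) (v : V) : nat := #|[set w | (w \notin S) && e v w]|.

Definition odd_comps (S T : {set V}) : {set {set V}} :=
  [set C : {set V} | component (S :|: T) C && odd (eps T C)].

Definition q (S T : {set V}) : nat := #|odd_comps S T|.

Definition delta (X S T : {set V}) : int :=
  (2 * #|S|)%:Z + (\sum_(v in T) deg_del S v)%:Z - (2 * #|T :&: X|)%:Z - (q S T)%:Z.

Definition barrier (X Y S T : {set V}) : Prop :=
  [/\ S \subset X, T \subset X :|: Y, S :&: T = set0 & (delta X S T < 0)%R].

Definition min_barrier (X Y S T : {set V}) : Prop :=
  barrier X Y S T /\
  forall S' T', barrier X Y S' T' -> #|S :|: T| <= #|S' :|: T'|.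

End Barrier.

(* Main.v *)
Require Import Defs.
From mathcomp Require Import all_boot all_order all_algebra.
From mathcomp Require Import zify ring lra.
Import GRing.Theory Num.Theory.
Set Implicit Arguments. Unset Strict Implicit. Unset Printing Implicit Defensive.

Section Aux.
Variable V : finType.
Variable e : rel V.
Hypothesis esym : symmetric e.
Hypothesis eirr : irreflexive e.

Definition comp (W : {set V}) (x : V) := [set y | connect (del_rel e W) x y].

Lemma del_sym (W : {set V}) : symmetric (del_rel e W).
Proof. by move=> x y; rewrite /del_rel /= esym; case: (x \in W); case: (y \in W); rewrite ?andbF. Qed.

Lemma conn_sym (W : {set V}) : connect_sym (del_rel e W).
Proof. exact: sym_connect_sym (del_sym W). Qed.

Lemma comp_out (W : {set V}) x y : x \notin W -> y \in comp W x -> y \notin W.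
Proof.
rewrite inE => xW /connectP [p]; elim: p x xW => [|z p IH] x xW /=.
  by move=> _ ->.
by case/andP => /and3P [_ _ zW] pp; exact: IH zW pp.
Qed.

Lemma comp_self (W : {set V}) x : x \in comp W x.
Proof. by rewrite inE connect0. Qed.

Lemma component_out (W C : {set V}) w : component e W C -> w \in C -> w \notin W.
Proof. by case/existsP => x /andP [xW /eqP ->]; apply: comp_out. Qed.

Lemma component_eq (W C : {set V}) w : component e W C -> w \in C -> C = comp W w.
Proof.
case/existsP => x /andP [xW /eqP ->]; rewrite inE => cxw.
apply/setP => y; rewrite !inE; apply/idP/idP => H.
  by apply: connect_trans H; rewrite conn_sym.
exact: connect_trans cxw H.
Qed.

Lemma comp_component (W : {set V}) w : w \notin W -> component e W (comp W w).
Proof. by move=> wW; apply/existsP; exists w; rewrite wW eqxx. Qed.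

End Aux.

Section Count.
Variable V : finType.
Variable e : rel V.
Hypothesis esym : symmetric e.
Hypothesis eirr : irreflexive e.

Lemma pairs_card (A : {set V}) (f : V -> V -> bool) :
  #|[set p : V * V | (p.1 \in A) && f p.1 p.2]| = \sum_(v in A) #|[set w | f v w]|.
Proof.
rewrite -sum1dep_card.
transitivity (\sum_(v in A) \sum_(w | f v w) 1).
  by rewrite pair_big_dep.
by apply: eq_bigr => v _; rewrite sum1dep_card.
Qed.

Lemma deg_split (S T A : {set V}) : S :&: T = set0 ->
  \sum_(v in A) deg_del e S v =
  #|[set p : V * V | [&& p.1 \in A, p.2 \in T & e p.1 p.2]]| +
  \sum_(C in [set C | component e (S :|: T) C]) eps e A C.
Proof.
move=> ST.
have dST : forall x, x \in T -> x \notin S.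
  move=> x xT; apply/negP => xS.
  by have := in_set0 x; rewrite -ST inE xS xT.
rewrite /deg_del -(pairs_card A (fun v w => (w \notin S) && e v w)).
set P := [set p : V * V | _].
rewrite -(cardsID [set p : V * V | p.2 \in T] P).
congr (_ + _).
  apply: eq_card => p; rewrite !inE.
  by case: (boolP (p.2 \in T)) => H; rewrite ?andbF ?andbT // (dST _ H) /= andbC.
rewrite -sum1_card.
rewrite (partition_big (fun p : V * V => comp e (S :|: T) p.2)
   (mem [set C | component e (S :|: T) C])); last first.
  move=> p; rewrite !inE => /andP [pT /andP [_ /andP [pS _]]].
  by apply: comp_component; rewrite inE negb_or pS.
apply: eq_bigr => C CC0; have CC : component e (S :|: T) C.
  by move: CC0; rewrite /= inE.
rewrite sum1dep_card /eps; apply: eq_card => p; rewrite !inE.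
apply/idP/idP.
  case/andP => /andP [pT /and3P [-> pS ->]] /eqP <-.
  by rewrite comp_self.
case/and3P => -> pC ->.
have pW := component_out CC pC.
move: (pW); rewrite inE negb_or => /andP [-> ->] /=.
by rewrite -(component_eq esym CC pC).
Qed.

End Count.

Lemma sum_odd (I : finType) (F : {set I}) (f : I -> nat) :
  odd (\sum_(i in F) f i) = odd #|[set i in F | odd (f i)]|.
Proof.
have -> : \sum_(i in F) f i = \sum_(i in F) odd (f i) + 2 * \sum_(i in F) (f i)./2.
  rewrite big_distrr -big_split /=; apply: eq_bigr => i _.
  by rewrite mul2n odd_double_half.
rewrite oddD oddM /= addbF; congr odd.
rewrite -sum1dep_card big_mkcondr /=; apply: eq_bigr => i _.
by case: (odd (f i)).
Qed.

Lemma even_sym (V : finType) (r : rel V) : symmetric r -> irreflexive r ->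
  ~~ odd #|[set p : V * V | r p.1 p.2]|.
Proof.
move=> rsym rirr.
set R := [set p : V * V | _].
set B := [set p : V * V | (enum_rank p.1 < enum_rank p.2)%N].
rewrite -(cardsID B R).
have -> : #|R :\: B| = #|R :&: B|; last by rewrite addnn odd_double.
have -> : R :\: B = (fun p : V * V => (p.2, p.1)) @^-1: (R :&: B).
  apply/setP => p; rewrite !inE /=.
  case Hr: (r p.1 p.2); rewrite rsym Hr ?andbF //=.
  have np : p.1 != p.2 by apply: contraTneq Hr => ->; rewrite rirr.
  have nr : (enum_rank p.2 : nat) != enum_rank p.1.
    by apply: contra np => /eqP /val_inj /enum_rank_inj ->.
  rewrite andbT; move: nr.
  case: (enum_rank p.2) => a Ha; case: (enum_rank p.1) => b Hb /=.
  by move=> nab; apply/idP/idP; lia.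
apply: (@card_preimset (V * V)%type (fun p : V * V => (p.2, p.1))); by move=> [a b] [c d] [-> ->].
Qed.

Section Drop.
Variable V : finType.
Variable e : rel V.
Hypothesis esym : symmetric e.

Lemma notin_drop (S T : {set V}) u z : z \notin S :|: T -> z \notin S :|: (T :\ u).
Proof. by rewrite !inE !negb_or => /andP [-> zT]; rewrite (negbTE zT) andbF. Qed.

Lemma eps_set1_0 (u : V) (C : {set V}) c : eps e [set u] C = 0 -> c \in C -> ~~ e u c.
Proof.
move=> /eqP; rewrite cards_eq0 => /eqP H cC; apply/negP => euc.
have : (u, c) \in [set p : V * V | [&& p.1 \in [set u], p.2 \in C & e p.1 p.2]].
  by rewrite !inE /= eqxx cC euc.
by rewrite H inE.
Qed.

Lemma odd_keep (S T : {set V}) u C : u \in T -> C \in odd_comps e S T ->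
  eps e [set u] C = 0 -> C \in odd_comps e S (T :\ u).
Proof.
move=> uT; rewrite !inE => /andP [CC oC] e0.
have noadj := eps_set1_0 e0.
have epsT : eps e (T :\ u) C = eps e T C.
  apply: eq_card => p; rewrite !inE.
  case: eqP => [->|] /=; last by [].
  case: (boolP (p.2 \in C)) => pc; last by rewrite andbF.
  by rewrite (negbTE (noadj _ pc)) !andbF.
rewrite epsT oC andbT.
case/existsP: CC => x /andP [xW /eqP defC].
apply/existsP; exists x; rewrite (notin_drop u xW) /=.
subst C; apply/eqP/setP => y; rewrite !inE; apply/idP/idP.
  apply: connect_sub => a b; rewrite /del_rel /= => /and3P [eab aW bW].
  by apply: connect1; rewrite /= eab !notin_drop.
have one : forall a b, del_rel e (S :|: (T :\ u)) a b ->
    a \in [set y | connect (del_rel e (S :|: T)) x y] ->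
    b \in [set y | connect (del_rel e (S :|: T)) x y].
  move=> a b /and3P [eab aW bW] aC.
  have aW0 := comp_out xW aC.
  have bW0 : b \notin S :|: T.
    move: bW; rewrite !inE !negb_or => /andP [-> /=].
    case: (b =P u) => [bu|] /=; last by move=> _ ->.
    move=> _; apply/negP => _.
    by move: (noadj a aC); rewrite esym -bu eab.
  rewrite inE; apply: connect_trans (connect1 _); first by rewrite inE in aC; exact: aC.
  by rewrite /del_rel /= eab aW0 bW0.
have cl : closed (del_rel e (S :|: (T :\ u))) [set y | connect (del_rel e (S :|: T)) x y].
  move=> a b Hab; apply/idP/idP; first exact: one.
  by apply: one; rewrite del_sym.
move=> H; have := closed_connect cl H.
by rewrite comp_self inE => <-.
Qed.

Lemma q_drop (S T : {set V}) u : u \in T ->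
  q e S T <= \sum_(C in odd_comps e S T) (eps e [set u] C != 0) + q e S (T :\ u).
Proof.
move=> uT; rewrite /q -(cardsID [set C | eps e [set u] C == 0] (odd_comps e S T)).
rewrite addnC leq_add //.
  rewrite (big_setID [set C | eps e [set u] C == 0]) /=.
  apply: leq_trans (leq_addl _ _); rewrite -sum1_card leq_eqVlt; apply/orP; left.
  apply/eqP/eq_bigr => C; rewrite !inE => /andP [/negbTE -> _] //.
apply: subset_leq_card; apply/subsetP => C; rewrite inE => /andP [CO]; rewrite inE => /eqP CB.
exact: odd_keep.
Qed.

End Drop.

Theorem lemma2p3 (V : finType) (e : rel V) (X Y S T : {set V}) :
  simple_graph e -> bipartition e X Y -> min_barrier e X Y S T ->
  [/\ T \subset X,
      (forall C, component e (S :|: T) C -> ~~ odd (eps e T C) -> eps e T C = 0),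
      (forall C, component e (S :|: T) C -> odd (eps e T C) ->
         forall u, u \in T -> eps e [set u] C <= 1) &
      ((#|T|%:Q - #|S|%:Q) >
         (1 / 2) * \sum_(C in odd_comps e S T) ((eps e T C)%:Q - 1))%R].
Proof.
move=> [esym eirr] [XY _ _] [[SX TXY ST dlt] minb].
set comps := [set C | component e (S :|: T) C].
set B := [set C : {set V} | odd (eps e T C)].
have compsB : comps :&: B = odd_comps e S T.
  by apply/setP => C; rewrite !inE.
have dST : forall x, x \in T -> x \notin S.
  move=> x xT; apply/negP => xS.
  by have := in_set0 x; rewrite -ST inE xS xT.
have par : odd (\sum_(v in T) deg_del e S v) = odd (q e S T).
  rewrite (deg_split esym T ST) oddD.
  rewrite (negbTE (@even_sym _ (fun x y => [&& x \in T, y \in T & e x y]) _ _)) /=; first last.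
  - by move=> x; rewrite eirr !andbF.
  - by move=> x y; rewrite esym andbCA.
  rewrite sum_odd /q; congr odd; apply: eq_card => C.
  by rewrite !inE.
have sumsplit : forall A : {set V}, \sum_(C in comps) eps e A C =
   \sum_(C in odd_comps e S T) eps e A C + \sum_(C in comps :\: B) eps e A C.
  by move=> A; rewrite (big_setID B) compsB.
have key : forall u, u \in T -> [/\ u \in X,
    \sum_(C in comps :\: B) eps e [set u] C = 0 &
    forall C, C \in odd_comps e S T -> eps e [set u] C <= 1].
  move=> u uT.
  set T' := T :\ u.
  have nb : ~ (delta e X S T' < 0)%R.
    move=> H.
    have bar : barrier e X Y S T'.
      split => //.
      - by apply: subset_trans TXY; apply: subD1set.
      - apply/setP => z; rewrite !inE; case zS: (z \in S) => //=.
        case zT: (z \in T); rewrite ?andbF //.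
        by move: (dST z zT); rewrite zS.
    have := minb _ _ bar.
    have sub : S :|: T' \subset (S :|: T) :\ u.
      apply/subsetP => z; rewrite !inE; case/orP => [zS|/andP [-> ->]]; last by rewrite orbT.
      rewrite zS orTb andbT; apply: contraTneq zS => ->; exact: dST.
    have := subset_leq_card sub.
    rewrite [#|S :|: T|](cardsD1 u) !inE uT orbT /=.
    lia.
  have degT : \sum_(v in T) deg_del e S v = deg_del e S u + \sum_(v in T') deg_del e S v.
    by rewrite (big_setD1 u uT).
  have cardTX : #|T :&: X| = (u \in X) + #|T' :&: X|.
    rewrite (cardsD1 u) !inE uT /=; congr (_ + _).
    by apply: eq_card => z; rewrite !inE andbA.
  have qd := q_drop esym S uT; rewrite -/T' in qd.
  have dsplit := deg_split esym [set u] ST.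
  rewrite big_set1 sumsplit in dsplit.
  set a := \sum_(C in odd_comps e S T) (eps e [set u] C != 0) in qd.
  have aleq : a <= \sum_(C in odd_comps e S T) eps e [set u] C.
    by apply: leq_sum => C _; case: (eps e [set u] C).
  move: nb dlt; rewrite /delta -/T' degT cardTX.
  move: par; rewrite degT => par.
  have {}par : (deg_del e S u + \sum_(v in T') deg_del e S v) %% 2 = q e S T %% 2.
    by rewrite !modn2 par.
  case uX: (u \in X) => /= nb dlt.
    split => //.
      have h1 : (2*#|S| + \sum_(v in T') deg_del e S v >= 2*#|T' :&: X| + q e S T')%N by lia.
      have h2 : (2*#|S| + deg_del e S u + \sum_(v in T') deg_del e S v < 2 + 2*#|T' :&: X| + q e S T)%N by lia.
      have h3 : deg_del e S u <= a by lia.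
      move: dsplit; set z := \sum_(C in comps :\: B) _; move=> dsplit. lia.
    move=> C0 C0o; rewrite leqNgt; apply/negP => big.
    have : a + 1 <= \sum_(C in odd_comps e S T) eps e [set u] C.
      rewrite /a (big_setD1 C0 C0o) [X in _ <= X](big_setD1 C0 C0o) /=.
      have : \sum_(i in odd_comps e S T :\ C0) (eps e [set u] i != 0)
          <= \sum_(i in odd_comps e S T :\ C0) eps e [set u] i.
        by apply: leq_sum => C _; case: (eps e [set u] C).
      have -> : (eps e [set u] C0 != 0) = true by move: big; case: (eps e [set u] C0).
      move: big; set x := eps e [set u] C0; set y := \sum_(i in _ :\ C0) eps e [set u] i; set z := \sum_(i in _ :\ C0) (eps e [set u] i != 0); simpl; lia.
    lia.
  exfalso; lia.
split.
- by apply/subsetP => u uT; case: (key u uT).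
- move=> C CC oC; case: (eqVneq (eps e T C) 0) => // nz; exfalso.
  move: nz; rewrite /eps cards_eq0 => /set0Pn [p]; rewrite inE => /and3P [pT pC ep].
  case: (key _ pT) => _ Hs _.
  have CcB : C \in comps :\: B by rewrite !inE CC (negbTE oC).
  move: Hs; rewrite (big_setD1 C CcB) => Hs.
  have e0 : eps e [set p.1] C = 0.
    by move/eqP: Hs; rewrite addn_eq0 => /andP [/eqP].
  by move: (eps_set1_0 e0 pC); rewrite ep.
- move=> C CC oC u uT; case: (key u uT) => _ _; apply.
  by rewrite inE CC oC.
have TX : T \subset X by apply/subsetP => u uT; case: (key u uT).
have dsplit := deg_split esym T ST.
rewrite sumsplit in dsplit.
move: dlt; rewrite /delta (setIidPl TX) => dlt.
have H : (\sum_(C in odd_comps e S T) eps e T C + 2 * #|S| < 2 * #|T| + q e S T)%N.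
  lia.
rewrite -(@ltr_nat rat) !natrD in H.
rewrite sumrB -natr_sum sumr_const.
move: H; rewrite /q.
move: (\sum_(C in odd_comps e S T) eps e T C) => s1.
move: #|odd_comps e S T| => n.
move: #|S| #|T| => s t H.
have -> : (1 *+ n = n%:R :> rat)%R by [].
lra.
Qed.
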